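(* Let $k$ be a field of characteristic $0$, $R=k[x_1,\dots,x_n]$, $\ell=x_1+\dots+x_n$, let $d_1,\dots,d_{n+1}$ be positive integers and $G=(x_1^{d_1},\dots,x_n^{d_n})\colon(\ell^{d_{n+1}})$. Then $R/G$ has the strong Lefschetz property.
   Context: A graded Artinian $k$-algebra $A$ has the strong Lefschetz property if there exists $\ell\in A_1$ such that for all $i$ and $j\ge0$ the multiplication map $\cdot\ell^j\colon A_i\to A_{i+j}$ is injective or surjective. *)

(* Defs.v *)
From HB Require Import structures.
From mathcomp Require Import all_boot all_algebra.
From mathcomp Require Import mpoly.
Set Implicit Arguments. Unset Strict Implicit. Unset Printing Implicit Defensive.
Import GRing.Theory.
Local Open Scope ring_scope.

(* Homogeneous of total degree [d] (every monomial in the support has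
   total degree d); the zero polynomial is homogeneous of every degree. *)
Definition homog_deg (n : nat) (k : fieldType) (d : nat) (p : {mpoly k[n]}) : bool :=
  p \is ishomog1 d (@mdeg n).

Definition in_powideal (n : nat) (k : fieldType) (d : 'I_n -> nat)
  (f : {mpoly k[n]}) : Prop :=
  exists h : 'I_n -> {mpoly k[n]}, f = \sum_(i < n) h i * 'X_i ^+ d i.

Definition lsum (n : nat) (k : fieldType) : {mpoly k[n]} := \sum_(i < n) 'X_i.

Definition in_colon (n : nat) (k : fieldType) (d : 'I_n -> nat) (e : nat)
  (f : {mpoly k[n]}) : Prop :=
  in_powideal d (f * (lsum n k) ^+ e).

(* The graded quotient A = R / J (J given by its membership predicate,
   a homogeneous ideal) has the strong Lefschetz property: there is
   L in A_1 (represented by a linear form of R_1) such that for all i, j,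
   multiplication by L^j : A_i -> A_{i+j} is injective or surjective.
   A_i = R_i / J_i, so:
   - injective: for f in R_i, f L^j in J implies f in J;
   - surjective: every g in R_{i+j} is congruent mod J to some f L^j, f in R_i. *)
Definition quot_SLP (n : nat) (k : fieldType) (J : {mpoly k[n]} -> Prop) : Prop :=
  exists L : {mpoly k[n]}, homog_deg 1 L /\
    forall i j : nat,
      (forall f : {mpoly k[n]}, homog_deg i f -> J (f * L ^+ j) -> J f)
      \/
      (forall g : {mpoly k[n]}, homog_deg (i + j) g ->
         exists f : {mpoly k[n]}, homog_deg i f /\ J (g - f * L ^+ j)).

(* Main.v *)
Require Import Defs.
From HB Require Import structures.
From mathcomp Require Import all_boot all_algebra.
From mathcomp Require Import mpoly.
From mathcomp Require Import fingroup perm.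
From mathcomp Require Import zify ring.
Import GRing.Theory.
Local Open Scope ring_scope.
Set Implicit Arguments. Unset Strict Implicit. Unset Printing Implicit Defensive.

Section Ideal.
Variables (k : fieldType) (n : nat) (d : 'I_n -> nat).
Local Notation R := {mpoly k[n]}.
Local Notation inI := (@in_powideal n k d).

Definition stdm (m : 'X_{1..n}) := [forall i, (m i < d i)%N].

Lemma inI0 : inI 0.
Proof. by exists (fun _ => 0); rewrite big1 // => i _; rewrite mul0r. Qed.

Lemma inID f g : inI f -> inI g -> inI (f + g).
Proof.
case=> h1 ->; case=> h2 ->; exists (fun i => h1 i + h2 i).
by rewrite -big_split /=; apply: eq_bigr => i _; rewrite mulrDl.
Qed.

Lemma inIMl g f : inI f -> inI (g * f).
Proof.
case=> h ->; exists (fun i => g * h i).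
by rewrite mulr_sumr; apply: eq_bigr => i _; rewrite mulrA.
Qed.

Lemma inIMr g f : inI f -> inI (f * g).
Proof. by move=> H; rewrite mulrC; apply: inIMl. Qed.

Lemma inIN f : inI f -> inI (- f).
Proof. by move=> H; rewrite -mulN1r; apply: inIMl. Qed.

Lemma inIB f g : inI f -> inI g -> inI (f - g).
Proof. by move=> Hf Hg; apply: inID => //; apply: inIN. Qed.

Lemma inIZ c f : inI f -> inI (c *: f).
Proof. by move=> H; rewrite -mul_mpolyC; apply: inIMl. Qed.

Lemma inI_sum (I : Type) (r : seq I) (P : pred I) (F : I -> R) :
  (forall i, P i -> inI (F i)) -> inI (\sum_(i <- r | P i) F i).
Proof.
move=> H; elim/big_rec: _ => [|i x Pi Hx]; first exact: inI0.
by apply: inID => //; apply: H.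
Qed.

Lemma inI_Xd (i : 'I_n) g : inI (g * 'X_i ^+ d i).
Proof.
exists (fun j => if j == i then g else 0).
rewrite (bigD1 i) //= eqxx big1 ?addr0 // => j /negbTE ->; by rewrite mul0r.
Qed.

Lemma inI_coef f m : inI f -> stdm m -> f@_m = 0.
Proof.
case=> h -> /forallP sm; rewrite raddf_sum /= big1 // => i _.
rewrite mpolyXn; apply: memN_msupp_eq0; apply/negP.
rewrite (perm_mem (msuppMX _ _)) => /mapP [m' _ E].
move: (sm i); rewrite E mnmDE mulmnE mnm1E eqxx mul1n; lia.
Qed.

Lemma inI_Xnstd m : ~~ stdm m -> inI 'X_[m].
Proof.
rewrite negb_forall => /existsP [i]; rewrite -leqNgt => hi.
have le : (U_(i) *+ d i <= m)%MM.
  apply/mnm_lepP => j; rewrite mulmnE mnm1E.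
  by case: eqP => [<-|]; rewrite ?mul1n ?mul0n.
rewrite -(submK le) mpolyXD -mpolyXn; exact: inI_Xd.
Qed.

Lemma inI_of_coef f : (forall m, stdm m -> f@_m = 0) -> inI f.
Proof.
move=> H; rewrite (mpolyE f); apply: inI_sum => m _.
case: (boolP (stdm m)) => [sm|nsm]; first by rewrite H // scale0r; exact: inI0.
by apply: inIZ; apply: inI_Xnstd.
Qed.

End Ideal.

Section Deriv.
Variables (k : fieldType) (n : nat).
Local Notation R := {mpoly k[n]}.

Lemma homog_of_coef a (p : R) :
  (forall m, mdeg m != a -> p@_m = 0) -> homog_deg a p.
Proof.
move=> H; apply/dhomogP => m; rewrite mcoeff_msupp => nz.
by apply/eqP; apply: contraR nz => /H ->.
Qed.

Lemma coef_homog a (p : R) m : homog_deg a p -> mdeg m != a -> p@_m = 0.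
Proof. exact: dhomog_nemf_coeff. Qed.

Lemma coefXi (g : R) i m :
  ('X_i * g)@_m = if (0 < m i)%N then g@_(m - U_(i)) else 0.
Proof.
case: ifP => hm.
  have le : (U_(i) <= m)%MM by rewrite lep1mP -lt0n.
  by rewrite -{1}(submK le) addmC mulrC mcoeffMX.
apply: memN_msupp_eq0; apply/negP.
rewrite mulrC (perm_mem (msuppMX _ _)) => /mapP [m' _ E].
by move: hm; rewrite E mnmDE mnm1E eqxx.
Qed.

Lemma coefXderiv (f : R) i m : ('X_i * mderiv i f)@_m = f@_m *+ m i.
Proof.
rewrite coefXi; case: ifP => hm; last first.
  by have -> : m i = 0%N by lia.
have le : (U_(i) <= m)%MM by rewrite lep1mP -lt0n.
rewrite mcoeff_deriv submK // mnmBE mnm1E eqxx; congr (_ *+ _); lia.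
Qed.

Lemma XderivX i m : 'X_i * mderiv i ('X_[m] : R) = (m i)%:R%:MP * 'X_[m].
Proof.
apply/mpolyP => m'; rewrite coefXderiv mcoeffCM !mcoeffX.
case: eqP => [->|_]; first by rewrite mulr1 mulr1n.
by rewrite mulr0 mul0rn.
Qed.

Lemma euler a (f : R) : homog_deg a f ->
  \sum_i 'X_i * mderiv i f = a%:R%:MP * f.
Proof.
move=> hf; apply/mpolyP => m; rewrite raddf_sum /= mcoeffCM.
under eq_bigr do rewrite coefXderiv.
rewrite sumrMnr -mdegE.
case: (eqVneq (mdeg m) a) => [->|ne]; first by rewrite mulr_natl.
by rewrite (coef_homog hf ne) mul0rn mulr0.
Qed.

Lemma deriv_homogS a (p : R) i : homog_deg a.+1 p -> homog_deg a (mderiv i p).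
Proof.
move=> hp; apply: homog_of_coef => m ne; rewrite mcoeff_deriv.
by rewrite (coef_homog hp) ?mul0rn // mdegD mdeg1 addn1 eqSS.
Qed.

Lemma deriv_homog0 (p : R) i : homog_deg 0 p -> mderiv i p = 0.
Proof.
move=> hp; apply/mpolyP => m; rewrite mcoeff_deriv mcoeff0.
by rewrite (coef_homog hp) ?mul0rn // mdegD mdeg1 addn1.
Qed.

Lemma deriv_homog a (p : R) i : homog_deg a p -> homog_deg a.-1 (mderiv i p).
Proof.
case: a => [|a] hp; last exact: deriv_homogS.
by rewrite deriv_homog0 //; apply: dhomog0.
Qed.

Lemma deriv_lsum i : mderiv i (lsum n k) = 1.
Proof.
rewrite /lsum raddf_sum /= (bigD1 i) //= big1 => [|j /negbTE nji].
  rewrite addr0 mderivX mnm1E eqxx.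
  have -> : (U_(i) - U_(i))%MM = 0%MM by apply/mnmP => j; rewrite mnmBE mnm0E subnn.
  by rewrite mpolyX0 scale1r.
by rewrite mderivX mnm1E nji scale0r.
Qed.

Lemma lsum_homog : homog_deg 1 (lsum n k).
Proof. apply: rpred_sum => i _; rewrite /homog_deg dhomogX /=; by rewrite mdeg1. Qed.

End Deriv.

Section Fop.
Variables (k : fieldType) (n : nat) (d : 'I_n -> nat).
Local Notation R := {mpoly k[n]}.
Local Notation inI := (@in_powideal n k d).
Local Notation ell := (lsum n k).

Definition Dop i (f : R) : R :=
  (d i).-1%:R * mderiv i f - 'X_i * mderiv i (mderiv i f).
Definition Fop (f : R) : R := \sum_i Dop i f.
Definition sdeg := (\sum_i (d i).-1)%N.

Lemma FopD f g : Fop (f + g) = Fop f + Fop g.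
Proof.
rewrite /Fop -big_split /=; apply: eq_bigr => i _; rewrite /Dop !raddfD /=; ring.
Qed.

Lemma Fop0 : Fop 0 = 0.
Proof. by rewrite /Fop big1 // => i _; rewrite /Dop !raddf0 !mulr0 subrr. Qed.

Lemma FopN f : Fop (- f) = - Fop f.
Proof.
rewrite /Fop -sumrN; apply: eq_bigr => i _; rewrite /Dop !raddfN /=; ring.
Qed.

Lemma FopB f g : Fop (f - g) = Fop f - Fop g.
Proof. by rewrite FopD FopN. Qed.

Lemma Fop_sum (I : Type) (r : seq I) (P : pred I) (F : I -> R) :
  Fop (\sum_(i <- r | P i) F i) = \sum_(i <- r | P i) Fop (F i).
Proof. exact: (big_morph Fop FopD Fop0). Qed.

Lemma mderiv1 i : mderiv i (1 : R) = 0.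
Proof. by rewrite -mpolyC1 mderivC. Qed.

Lemma Fop_lsum a f : homog_deg a f ->
  Fop (ell * f) = ell * Fop f + (sdeg%:R - (2 * a)%:R) * f.
Proof.
move=> hf.
have e : forall i, Dop i (ell * f) =
   ell * Dop i f + (d i).-1%:R * f - 2%:R * ('X_i * mderiv i f).
  move=> i; rewrite /Dop mderivM deriv_lsum !mul1r mderivD mderivM deriv_lsum mul1r; ring.
rewrite /Fop (eq_bigr _ (fun i _ => e i)).
rewrite big_split /= big_split /= -mulr_sumr sumrN -mulr_sumr (euler hf).
rewrite -mulr_suml -natr_sum /sdeg natrM; ring.
Qed.


Lemma ellX_homog a j f : homog_deg a f -> homog_deg (a + j) (ell ^+ j * f).
Proof.
move=> hf; rewrite addnC; apply: dhomogM => //.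
by have := dhomogMn j (lsum_homog k n); rewrite mul1n.
Qed.

Lemma Fop_lsumX a m f : homog_deg a f ->
  Fop (ell ^+ m.+1 * f) = ell ^+ m.+1 * Fop f
     + (m.+1%:R * (sdeg%:R - (2 * a)%:R - m%:R)) * (ell ^+ m * f).
Proof.
move=> hf; elim: m => [|m IH].
  by rewrite expr1 expr0 mul1r (Fop_lsum hf); congr (_ + _); ring.
rewrite exprS -mulrA (Fop_lsum (ellX_homog m.+1 hf)) IH.
rewrite ?natrD ?natrM ?natrD !exprS.
ring.
Qed.

Lemma Fop_homog a f : homog_deg a f -> homog_deg a.-1 (Fop f).
Proof.
move=> hf; apply: rpred_sum => i _; rewrite /Dop.
case: a hf => [|[|b]] hf /=.
- by rewrite !(deriv_homog0 i hf) mderiv0 !mulr0 subrr; apply: dhomog0.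
- have h0 := deriv_homogS i hf.
  rewrite (deriv_homog0 i h0) mulr0 subr0 mulr_natl; exact: rpredMn.
- have h1 := deriv_homogS i hf.
  have h0 := deriv_homogS i h1.
  apply: rpredB; first by rewrite mulr_natl; exact: rpredMn.
  rewrite -add1n; apply: dhomogM => //; rewrite /homog_deg dhomogX /=; by rewrite mdeg1.
Qed.

Lemma Fop_homog0 f : homog_deg 0 f -> Fop f = 0.
Proof.
move=> hf; rewrite /Fop big1 // => i _; rewrite /Dop.
by rewrite !(deriv_homog0 i hf) mderiv0 !mulr0 subrr.
Qed.

Lemma Dop_I i j (h : R) : inI (Dop j (h * 'X_i ^+ d i) - Dop j h * 'X_i ^+ d i).
Proof.
have PX : 'X_i ^+ d i = 'X_[U_(i) *+ d i] :> R by rewrite mpolyXn.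
case: (eqVneq j i) => [->|nji].
  pose Q := mderiv i ('X_i ^+ d i : R).
  have XQ : 'X_i * Q = (d i)%:R * 'X_i ^+ d i.
    by rewrite /Q PX XderivX mulmnE mnm1E eqxx mul1n mpolyC_nat.
  have XdQ : 'X_i * mderiv i Q = (d i).-1%:R * Q.
    rewrite /Q PX mderivX mderivZ -scalerAr XderivX mnmBE !mulmnE !mnm1E eqxx.
    rewrite !mul1n subn1 mpolyC_nat -!mul_mpolyC mpolyC_nat; ring.
  have -> : Dop i (h * 'X_i ^+ d i) - Dop i h * 'X_i ^+ d i =
     (d i).-1%:R * h * Q - 2%:R * mderiv i h * ('X_i * Q)
       - h * ('X_i * mderiv i Q).
    rewrite /Dop -/Q mderivM -/Q mderivD !mderivM; ring.
  rewrite XQ XdQ.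
  have -> : (d i).-1%:R * h * Q - 2%:R * mderiv i h * ((d i)%:R * 'X_i ^+ d i) -
    h * ((d i).-1%:R * Q) = (- (2%:R * (d i)%:R * mderiv i h)) * 'X_i ^+ d i by ring.
  exact: inI_Xd.
have Q0 : mderiv j ('X_i ^+ d i : R) = 0.
  by rewrite PX mderivX mulmnE mnm1E eq_sym (negbTE nji) mul0n scale0r.
rewrite /Dop !(mderivM, Q0, mulr0, addr0).
have -> : forall (c x y z : R), c * (x * z) - 'X_j * (y * z) - (c * x - 'X_j * y) * z = 0
  by move=> c x y z; ring.
exact: inI0.
Qed.

Lemma Fop_I f : inI f -> inI (Fop f).
Proof.
case=> h ->; rewrite Fop_sum; apply: inI_sum => i _.
have -> : Fop (h i * 'X_i ^+ d i) = Fop (h i) * 'X_i ^+ d i +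
   \sum_j (Dop j (h i * 'X_i ^+ d i) - Dop j (h i) * 'X_i ^+ d i).
  by rewrite sumrB /Fop mulr_suml addrC subrK.
apply: inID; first exact: inI_Xd.
by apply: inI_sum => j _; exact: Dop_I.
Qed.

End Fop.

Section Inj.
Variables (k : fieldType) (n : nat) (d : 'I_n -> nat).
Hypothesis char0 : [pchar k] =i pred0.
Local Notation R := {mpoly k[n]}.
Local Notation inI := (@in_powideal n k d).
Local Notation ell := (lsum n k).
Local Notation s := (sdeg d).

Lemma inI_natK m (g : R) : (0 < m)%N -> inI ((m%:R : R) * g) -> inI g.
Proof.
move=> m0 H.
have nz : (m%:R : k) != 0 by rewrite (proj1 (pcharf0P k) char0); lia.
have -> : g = ((m%:R : k)^-1)%:MP * ((m%:R : R) * g).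
  by rewrite -mpolyC_nat mulrA -mpolyCM mulVf // mpolyC1 mul1r.
exact: inIMl.
Qed.

Lemma inj_lsum a j f : homog_deg a f -> (2 * a + j <= s)%N ->
  inI (ell ^+ j * f) -> inI f.
Proof.
elim: a j f => [|a IHa] j; elim: j => [|j IHj] f hf hs hI;
  try by rewrite expr0 mul1r in hI.
- apply: IHj => //; first lia.
  have := Fop_lsumX d j hf; rewrite (Fop_homog0 d hf) mulr0 add0r => E.
  apply: (@inI_natK ((j.+1) * (s - 2 * 0 - j))); first by rewrite muln_gt0 /=; lia.
  rewrite natrM natrB ?natrB; try lia.
  rewrite -E; exact: Fop_I.
- apply: IHj => //; first lia.
  have hF : inI (Fop d f).
    apply: (IHa j.+2 _ (Fop_homog d hf)); first lia.
    have := Fop_lsumX d j.+1 hf => E.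
    have -> : ell ^+ j.+2 * Fop d f = Fop d (ell ^+ j.+2 * f) -
      j.+2%:R * (s%:R - (2 * a.+1)%:R - j.+1%:R) * (ell ^+ j.+1 * f).
      by rewrite E addrK.
    apply: inIB; last exact: inIMl.
    by apply: Fop_I; rewrite exprS -mulrA; exact: inIMl.
  have := Fop_lsumX d j hf => E.
  apply: (@inI_natK ((j.+1) * (s - 2 * a.+1 - j))); first by rewrite muln_gt0 /=; lia.
  rewrite natrM natrB ?natrB; try lia.
  have -> : j.+1%:R * (s%:R - (2 * a.+1)%:R - j%:R) * (ell ^+ j * f) =
     Fop d (ell ^+ j.+1 * f) - ell ^+ j.+1 * Fop d f by rewrite E; ring.
  apply: inIB; first exact: Fop_I.
  exact: inIMl.
Qed.

End Inj.

Section Mon.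
Variables (n : nat) (d : 'I_n -> nat).
Local Notation s := (sdeg d).

Definition Dm := (\max_(i < n) d i)%N.
Definition UU := {ffun 'I_n -> 'I_Dm.+1}.
Definition NN := #|{: UU}|.
Definition mon (u : UU) : 'X_{1..n} := [multinom (u i : nat) | i < n].
Definition mp (p : 'I_NN) := mon (enum_val p).

Lemma mon_inj : injective mon.
Proof.
move=> u v /mnmP E; apply/ffunP => i; apply: val_inj.
by have := E i; rewrite !mnmE.
Qed.

Lemma mp_inj : injective mp.
Proof. by move=> p q /mon_inj /enum_val_inj. Qed.

Lemma mp_surj m : stdm d m -> exists q, mp q = m.
Proof.
move=> /forallP sm.
have le i : (m i <= Dm)%N.
  apply: leq_trans (ltnW (sm i)) _; exact: (leq_bigmax i).
exists (enum_rank [ffun i => inord (m i) : 'I_Dm.+1]).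
rewrite /mp enum_rankK; apply/mnmP => i; rewrite mnmE ffunE inordK //.
by rewrite ltnS.
Qed.

Lemma std_deg m : stdm d m -> (mdeg m <= s)%N.
Proof.
move=> /forallP sm; rewrite mdegE /sdeg; apply: leq_sum => i _.
by have := sm i; lia.
Qed.

Definition cmpl (u : UU) : UU :=
  if stdm d (mon u) then [ffun i => inord ((d i).-1 - u i)] else u.

Lemma comp_val u i : stdm d (mon u) -> mon (cmpl u) i = ((d i).-1 - mon u i)%N.
Proof.
move=> su; rewrite /cmpl su mnmE ffunE inordK ?mnmE //.
have : (d i <= Dm)%N by exact: (leq_bigmax i).
lia.
Qed.

Lemma comp_std u : stdm d (mon (cmpl u)) = stdm d (mon u).
Proof.
case: (boolP (stdm d (mon u))) => su; last by rewrite /cmpl (negbTE su) /= (negbTE su).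
apply/forallP => i; rewrite comp_val //.
by move/forallP: su => /(_ i); lia.
Qed.

Lemma compK : involutive cmpl.
Proof.
move=> u; case: (boolP (stdm d (mon u))) => su; last by rewrite /cmpl (negbTE su) /= (negbTE su).
apply: mon_inj; apply/mnmP => i; rewrite comp_val ?comp_std // comp_val //.
by move/forallP: su => /(_ i); rewrite mnmE; lia.
Qed.

Lemma comp_deg u : stdm d (mon u) -> mdeg (mon (cmpl u)) = (s - mdeg (mon u))%N.
Proof.
move=> su; have le i : (mon u i <= (d i).-1)%N by move/forallP: su => /(_ i); lia.
have e : (mdeg (mon (cmpl u)) + mdeg (mon u) = s)%N.
  rewrite !mdegE /sdeg -big_split /=; apply: eq_bigr => i _.
  rewrite comp_val //; have := le i; lia.
lia.
Qed.

Definition cp (p : 'I_NN) : 'I_NN := enum_rank (cmpl (enum_val p)).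
Lemma cpK : involutive cp.
Proof. by move=> p; rewrite /cp enum_rankK compK enum_valK. Qed.
Definition sigma : {perm 'I_NN} := perm (can_inj cpK).
Lemma sigmaE p : sigma p = cp p. Proof. by rewrite permE. Qed.

Lemma mp_cp p : mp (cp p) = mon (cmpl (enum_val p)).
Proof. by rewrite /mp /cp enum_rankK. Qed.

Lemma mcoefMXg (k : fieldType) (g : {mpoly k[n]}) m m' :
  (g * 'X_[m])@_m' = if (m <= m')%MM then g@_(m' - m) else 0.
Proof.
case: ifP => le; first by rewrite -{1}(submK le) addmC mcoeffMX.
apply: memN_msupp_eq0; apply/negP.
rewrite (perm_mem (msuppMX _ _)) => /mapP [x _ E].
by move: le; rewrite E lem_addr.
Qed.

End Mon.

Section Mat.
Variables (k : fieldType) (n : nat) (d : 'I_n -> nat).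
Hypothesis char0 : [pchar k] =i pred0.
Local Notation R := {mpoly k[n]}.
Local Notation inI := (@in_powideal n k d).
Local Notation ell := (lsum n k).
Local Notation s := (sdeg d).
Local Notation N := (NN d).
Local Notation mpd := (@mp n d).
Local Notation cpd := (@cp n d).

Definition stdp (p : 'I_N) := stdm d (mpd p).
Definition cnd a (p : 'I_N) := stdp p && (mdeg (mpd p) == a).
Definition Pd a : 'M[k]_N := diag_mx (\row_p (cnd a p)%:R).
Definition Mx J : 'M[k]_N := \matrix_(p, q)
   (if stdp p && stdp q then (ell ^+ J * 'X_[mpd p])@_(mpd q) else 0).
Definition polyOf (r : 'rV[k]_N) : R := \sum_p r 0 p *: 'X_[mpd p].

Lemma coef_polyOf r q : (polyOf r)@_(mpd q) = r 0 q.
Proof.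
rewrite /polyOf raddf_sum /= (bigD1 q) //= big1 => [|p npq].
  by rewrite mcoeffZ mcoeffX eqxx mulr1 addr0.
rewrite mcoeffZ mcoeffX; case: eqP => [/mp_inj E|_]; last by rewrite mulr0.
by rewrite E eqxx in npq.
Qed.

Lemma rowPd (r : 'rV[k]_N) a q : (r *m Pd a) 0 q = r 0 q * (cnd a q)%:R.
Proof. by rewrite /Pd mul_mx_diag !mxE. Qed.

Lemma supp0 (r : 'rV[k]_N) a p : r *m Pd a = r -> ~~ cnd a p -> r 0 p = 0.
Proof. by move=> E np; rewrite -E rowPd (negbTE np) mulr0. Qed.

Lemma PdK a : Pd a *m Pd a = Pd a.
Proof.
apply/matrixP => i j; rewrite /Pd mul_mx_diag !mxE.
by case: eqP => [->|_]; case: (cnd a j); rewrite ?mulr1 ?mulr0 ?mul0r ?mulr0n. 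
Qed.

Lemma polyOf_homog (r : 'rV[k]_N) a : r *m Pd a = r -> homog_deg a (polyOf r).
Proof.
move=> E; apply: rpred_sum => p _.
case: (boolP (cnd a p)) => cp.
  by apply: rpredZ; rewrite /homog_deg dhomogX; case/andP: cp.
by rewrite (supp0 E cp) scale0r; exact: rpred0.
Qed.

Lemma coef_polyOfM (r : 'rV[k]_N) a J q : r *m Pd a = r -> stdp q ->
  (polyOf r * ell ^+ J)@_(mpd q) = (r *m Mx J) 0 q.
Proof.
move=> E sq; rewrite /polyOf mulr_suml raddf_sum !mxE /=.
apply: eq_bigr => p _; rewrite -scalerAl mcoeffZ mxE sq andbT.
case: (boolP (stdp p)) => sp; first by rewrite [_ * ell ^+ J]mulrC.
by rewrite (supp0 E) ?mul0r ?mulr0 // /cnd (negbTE sp).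
Qed.

Lemma inI_std f : (forall q, stdp q -> f@_(mpd q) = 0) -> inI f.
Proof.
move=> H; apply: inI_of_coef => m sm; have [q E] := mp_surj sm.
by rewrite -E; apply: H; rewrite /stdp E.
Qed.

Lemma polyOf_I (r : 'rV[k]_N) a : r *m Pd a = r -> inI (polyOf r) -> r = 0.
Proof.
move=> E hI; apply/rowP => q; rewrite mxE -coef_polyOf.
case: (boolP (stdp q)) => sq; first exact: inI_coef hI sq.
by rewrite coef_polyOf (supp0 E) // /cnd (negbTE sq).
Qed.

Lemma rank_inj c J : (2 * c + J <= s)%N -> \rank (Pd c *m Mx J) = \rank (Pd c).
Proof.
move=> hs; have := mxrank_mul_ker (Pd c) (Mx J).
suff -> : (Pd c :&: kermx (Mx J))%MS = 0 by rewrite mxrank0 addn0.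
apply/row_matrixP => i; rewrite row0; set v := row i _.
have vX : (v <= (Pd c :&: kermx (Mx J)))%MS by exact: row_sub.
have /submxP [D vD] := submx_trans vX (capmxSl _ _).
have /sub_kermxP vM := submx_trans vX (capmxSr _ _).
have E : v *m Pd c = v by rewrite vD -mulmxA PdK.
apply: (polyOf_I E).
apply: (inj_lsum char0 (polyOf_homog E) hs); rewrite mulrC.
apply: inI_std => q sq; rewrite (coef_polyOfM _ E sq) vM mxE //.
Qed.


Lemma stdp_cp p : stdp (cpd p) = stdp p.
Proof. by rewrite /stdp mp_cp comp_std. Qed.

Lemma cnd_cp x p : (x <= s)%N -> cnd x (cpd p) = cnd (s - x)%N p.
Proof.
move=> hx; rewrite /cnd stdp_cp; case: (boolP (stdp p)) => sp //=.
rewrite mp_cp comp_deg //; have := std_deg sp; rewrite /mp => hy.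
by apply/idP/idP => /eqP H; apply/eqP; lia.
Qed.

Lemma PMP c J : Pd c *m Mx J *m Pd (c + J) = Pd c *m Mx J.
Proof.
apply/matrixP => p q; rewrite /Pd mul_mx_diag mul_diag_mx !mxE.
case: (boolP (cnd (c + J) q)) => cq; first by rewrite mulr1.
rewrite mulr0; case: (boolP (cnd c p)) => cp; last by rewrite mul0r.
rewrite mul1r; case: ifP => // /andP [sp sq]; symmetry.
move: cp => /andP [_ /eqP dp].
have hX : homog_deg (mdeg (mpd p)) ('X_[mpd p] : R) by rewrite /homog_deg dhomogX.
apply: (coef_homog (ellX_homog J hX)).
by apply/negP => /eqP E; move: cq; rewrite /cnd sq E dp eqxx.
Qed.


Lemma rank_rowcol (B : 'M[k]_N) :
  \rank (col_perm (sigma d) (row_perm (sigma d) B)) = \rank B.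
Proof.
rewrite col_permE mxrankMfree ?row_free_unit ?unitmx_perm // row_permE.
apply: eqmx_rank; apply/eqmxP; apply: eqmxMfull.
by rewrite row_full_unit unitmx_perm.
Qed.

Lemma rank_perm1 (A B : 'M[k]_N) :
  (forall p q, A p q = B (cpd p) (cpd q)) -> \rank A = \rank B.
Proof.
move=> H; have -> : A = col_perm (sigma d) (row_perm (sigma d) B).
  by apply/matrixP => p q; rewrite !mxE !sigmaE H.
exact: rank_rowcol.
Qed.

Lemma rank_perm2 (A B : 'M[k]_N) :
  (forall p q, A p q = B (cpd q) (cpd p)) -> \rank A = \rank B.
Proof.
move=> H; have -> : A = (col_perm (sigma d) (row_perm (sigma d) B))^T.
  by apply/matrixP => p q; rewrite !mxE !sigmaE H.
by rewrite mxrank_tr; exact: rank_rowcol.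
Qed.

Lemma rank_Pd_sym x : (x <= s)%N -> \rank (Pd x) = \rank (Pd (s - x)%N).
Proof.
move=> hx; apply: rank_perm1 => p q; rewrite !mxE cnd_cp ?subKn //; last lia.
by rewrite (can_eq (@cpK n d)).
Qed.

Lemma mon_le_pred p i : stdp p -> (mpd p i <= (d i).-1)%N.
Proof. by move/forallP => /(_ i); lia. Qed.

Lemma Mx_sym J p q : stdp p -> stdp q -> Mx J (cpd q) (cpd p) = Mx J p q.
Proof.
move=> sp sq; rewrite !mxE !stdp_cp sp sq /=.
rewrite (mcoefMXg (ell ^+ J) (mpd (cpd q))) (mcoefMXg (ell ^+ J) (mpd p)) !mp_cp.
have bp := fun i => mon_le_pred i sp; have bq := fun i => mon_le_pred i sq.
move: bp bq; rewrite /mp => bp bq.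
have le : (mon (cmpl (enum_val q)) <= mon (cmpl (enum_val p)))%MM =
          (mon (enum_val p) <= mon (enum_val q))%MM.
  apply/mnm_lepP/mnm_lepP => H i; have := H i; have := bp i; have := bq i;
    rewrite !comp_val //; lia.
rewrite le; case: ifP => // _; congr (_ @_ _); apply/mnmP => i.
rewrite !mnmBE !comp_val //; have := bp i; have := bq i; lia.
Qed.

Lemma rank_A1A2 a J : (a + J <= s)%N ->
  \rank (Pd a *m Mx J *m Pd (a + J)) =
  \rank (Pd (s - a - J)%N *m Mx J *m Pd (s - a - J + J)%N).
Proof.
move=> h; apply: rank_perm2 => p q.
rewrite /Pd !mul_mx_diag !mul_diag_mx !mxE.
rewrite cnd_cp; last lia. rewrite cnd_cp; last lia.
have -> : (s - (s - a - J))%N = (a + J)%N by lia.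
have -> : (s - (s - a - J + J))%N = a by lia.
case: (boolP (cnd a p)) => cp; last by rewrite !mul0r !mulr0.
case: (boolP (cnd (a + J) q)) => cq; last by rewrite !mulr0 !mul0r.
have sp : stdp p by case/andP: cp.
have sq : stdp q by case/andP: cq.
by have := Mx_sym J sp sq; rewrite !mxE => ->.
Qed.


Lemma surj_lsum a J (g : R) : (s <= 2 * a + J)%N -> homog_deg (a + J) g ->
  exists f, homog_deg a f /\ inI (g - f * ell ^+ J).
Proof.
move=> hs hg.
have hl : homog_deg J (ell ^+ J) by have := dhomogMn J (lsum_homog k n); rewrite mul1n.
case: (leqP (a + J) s) => h; last first.
  exists 0; split; first exact: dhomog0.
  rewrite mul0r subr0; apply: inI_std => q sq.
  apply: (coef_homog hg); apply/eqP => E; have := std_deg sq; rewrite E; lia.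
pose A1 := Pd a *m Mx J *m Pd (a + J).
have rk : \rank A1 = \rank (Pd (a + J)).
  rewrite /A1 rank_A1A2 // PMP rank_inj; last lia.
  by rewrite (rank_Pd_sym h) subnDA.
have sub : (A1 <= Pd (a + J)%N)%MS by exact: submxMl.
have eq : (A1 == Pd (a + J)%N)%MS by rewrite -(mxrank_leqif_eq sub).2 rk.
have sub2 : (Pd (a + J)%N <= A1)%MS by case/andP: eq.
pose v := (\row_q g@_(mpd q)) *m Pd (a + J).
have vA : (v <= A1)%MS := submx_trans (submxMl _ _) sub2.
have [w vw] := submxP vA.
pose r := w *m Pd a.
have Er : r *m Pd a = r by rewrite /r -mulmxA PdK.
exists (polyOf r); split; first exact: polyOf_homog Er.
apply: inI_std => q sq; rewrite mcoeffB (coef_polyOfM _ Er sq).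
case: (boolP (mdeg (mpd q) == a + J)) => dq.
  have : v 0 q = (r *m Mx J) 0 q.
    by rewrite vw /A1 !mulmxA -/r rowPd /cnd sq dq mulr1.
  by rewrite /v rowPd mxE /cnd sq dq mulr1 => ->; rewrite subrr.
rewrite (coef_homog hg dq) -(coef_polyOfM _ Er sq).
by rewrite (coef_homog (dhomogM (polyOf_homog Er) hl) dq) subrr.
Qed.

End Mat.


Unset Implicit Arguments.

Theorem mainTheorem14 (k : fieldType) (n : nat)
  (d : 'I_n -> nat) (e : nat) :
  [pchar k] =i pred0 ->
  (forall i, (0 < d i)%N) -> (0 < e)%N ->
  quot_SLP (in_colon (k := k) d e).
Proof.
move=> char0 _ _; exists (lsum n k); split; first exact: lsum_homog.
move=> i j.
case: (leqP (2 * i + (j + e)) (sdeg d)) => h.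
- left => f hf hJ; rewrite /in_colon in hJ *.
  apply: inIMr; apply: (inj_lsum char0 hf h).
  have -> : lsum n k ^+ (j + e) * f = f * lsum n k ^+ j * lsum n k ^+ e
    by rewrite exprD; ring.
  exact: hJ.
- right => g hg.
  have hl : homog_deg e (lsum n k ^+ e).
    by have := dhomogMn e (lsum_homog k n); rewrite mul1n.
  have hge : homog_deg (i + (j + e)) (g * lsum n k ^+ e).
    by rewrite addnA; apply: dhomogM.
  have [f [hf hI]] := surj_lsum char0 (ltnW h) hge.
  exists f; split => //; rewrite /in_colon.
  have -> : (g - f * lsum n k ^+ j) * lsum n k ^+ e =
     g * lsum n k ^+ e - f * lsum n k ^+ (j + e) by rewrite exprD; ring.
  exact: hI.
Qed.
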